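(* Let $L$ be a regular language over a finite alphabet $\Sigma$ and $\Delta$ a finite set of quantifier-free replacement queries (over string databases). Then $(q_L,\Delta)$ can be maintained in DynProp with suitable initialization.
   Context: Framework. A replacement rule for a relation symbol $R$ is $R := \mu_R(\bar p;\bar x)$, where $\mu_R$ is a first-order formula over the schema, $\bar x$ has the arity of $R$, and $\bar p$ is a tuple of parameter variables. A replacement query $\rho(\bar p)$ is a set of replacement rules for distinct relation symbols, all with the same parameter tuple $\bar p$; it is quantifier-free (resp. in $\mathrm{FO}[\exists^*]$) if all its formulas are quantifier-free (resp. existential). A change $\delta=\rho(\bar a)$ consists of $\rho$ and a tuple $\bar a$ of domain elements; $\delta(\mathcal D)$ replaces every relation $R$ having a rule in $\rho$ by $\{\bar b : \mathcal D\models \mu_R(\bar a;\bar b)\}$. A dynamic program operates on states consisting of an input database and an auxiliary database over a common fixed finite domain. For every allowed replacement query $\rho(\bar p)$ and every auxiliary symbol $T$ it has an update formula $\varphi_T(\bar p;\bar x)$ over input and auxiliary schema; on a change $\rho(\bar a)$ the input is replaced by its image and each $T$ becomes $\{\bar b: \text{old state}\models\varphi_T(\bar a,\bar b)\}$. A program maintains $(q,\Delta)$ if it has an auxiliary relation $Q$ that, after every nonempty sequence of changes from $\Delta$ applied to the initial input database, equals $q$ of the current input. DynFO / DynProp: update formulas first-order / quantifier-free. ''With suitable initialization'' means the initial auxiliary database need not be empty but may be a suitable auxiliary database depending on the initial input (polynomial-time computable in all cases of the paper). Strings: a word over $\Sigma$ is represented by a database with domain $\{1,\dots,n\}$, the natural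 linear order $<$, constants $\min=1$, $\max=n$, and one unary relation $R_\sigma$ per $\sigma\in\Sigma$, where each element is in at most one $R_\sigma$. Position $i$ carries $w_i=\sigma$ if $i\in R_\sigma$ and $w_i=\epsilon$ otherwise, and the database represents $w_1\cdots w_n$. Initially all $R_\sigma$ are empty. Changes never modify $<$, $\min$, $\max$, and only replacement queries are applied whose results again have each position in at most one $R_\sigma$. $q_L$ is the Boolean query that is true iff the represented word is in $L$. *)

(* Defs.v *)
From mathcomp Require Import all_boot.
Set Implicit Arguments. Unset Strict Implicit. Unset Printing Implicit Defensive.

Record dfa (S : finType) := DFA {
  dfa_state : finType;
  dfa_s0 : dfa_state;
  dfa_acc : pred dfa_state;
  dfa_trans : dfa_state -> S -> dfa_state }.

Definition dfa_accepts (S : finType) (M : dfa S) (w : seq S) : bool :=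
  @dfa_acc S M (foldl (@dfa_trans S M) (@dfa_s0 S M) w).

Definition regular (S : finType) (L : seq S -> Prop) : Prop :=
  exists M : dfa S, forall w, L w <-> dfa_accepts M w.

Inductive term (V : Type) : Type := TVar of V | TMin | TMax.

Inductive qf (S : Type) (A : Type) (ar : A -> nat) (V : Type) : Type :=
| QTrue
| QNot of qf S ar V
| QAnd of qf S ar V & qf S ar V
| QOr of qf S ar V & qf S ar V
| QEq of term V & term V
| QLt of term V & term V
| QLetter of S & term V
| QAux (T : A) of ('I_(ar T) -> term V).

(* Domain of a database of size n.+1 is 'I_n.+1 (positions 1..n.+1 shifted),
   with natural order, min = ord0, max = ord_max. *)
Definition inrel (S : Type) (n : nat) := S -> pred 'I_n.+1.
Definition auxrel (A : Type) (ar : A -> nat) (n : nat) :=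
  forall T : A, pred ((ar T).-tuple 'I_n.+1).

Definition eval_term (n : nat) (V : Type) (e : V -> 'I_n.+1) (t : term V) : 'I_n.+1 :=
  match t with TVar v => e v | TMin => ord0 | TMax => ord_max end.

Fixpoint eval (S : Type) (A : Type) (ar : A -> nat) (n : nat) (V : Type)
    (inp : inrel S n) (aux : auxrel ar n) (e : V -> 'I_n.+1) (phi : qf S ar V) : bool :=
  match phi with
  | QTrue => true
  | QNot p => ~~ eval inp aux e p
  | QAnd p q => eval inp aux e p && eval inp aux e q
  | QOr p q => eval inp aux e p || eval inp aux e q
  | QEq t u => eval_term e t == eval_term e u
  | QLt t u => (eval_term e t < eval_term e u)%N
  | QLetter s t => inp s (eval_term e t)
  | QAux T ts => aux T [tuple eval_term e (ts j) | j < ar T]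
  end.

Definition noar (v : Empty_set) : nat := match v with end.
Definition noaux (n : nat) : auxrel noar n := fun T => match T with end.

(* ---------- Quantifier-free replacement queries ----------
   rho(p_1..p_k) has at most one rule R_sigma := mu_sigma(p; x) per sigma
   (the rules never touch <, min, max).  Variables: inl i = p_i, inr _ = x. *)
Record rquery (S : finType) := RQuery {
  rq_k : nat;
  rq_rule : S -> option (@qf S Empty_set noar ('I_rq_k + 'I_1)%type) }.

Definition apply_rq (S : finType) (n : nat) (r : rquery S)
    (a : 'I_(rq_k r) -> 'I_n.+1) (inp : inrel S n) : inrel S n :=
  fun s => match rq_rule r s with
           | Some mu => fun b => eval inp (@noaux n)
                          (fun v => match v with inl i => a i | inr _ => b end) mu
           | None => inp s
           end.

(* ---------- DynProp programs ----------
   Auxiliary relational schema (dp_aux, dp_ar), designated query symbol dp_Q,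
   and a quantifier-free update formula phi_T(p; x) for every replacement query
   and every auxiliary symbol T (variables: inl i = p_i, inr j = x_j). *)
Record dynprog (S : finType) := DynProg {
  dp_aux : finType;
  dp_ar : dp_aux -> nat;
  dp_Q : dp_aux;
  dp_upd : forall (r : rquery S) (T : dp_aux),
             qf S dp_ar ('I_(rq_k r) + 'I_(dp_ar T))%type }.

Definition state (S : finType) (P : dynprog S) (n : nat) :=
  (inrel S n * auxrel (@dp_ar S P) n)%type.

Definition step (S : finType) (P : dynprog S) (n : nat) (r : rquery S)
    (a : 'I_(rq_k r) -> 'I_n.+1) (st : state P n) : state P n :=
  (apply_rq a st.1,
   fun (T : dp_aux P) (b : (@dp_ar S P T).-tuple 'I_n.+1) =>
     eval st.1 st.2 (fun v => match v with inl i => a i | inr j => tnth b j end)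
          (@dp_upd S P r T)).

Definition change (S : finType) (I : Type) (Delta : I -> rquery S) (n : nat) :=
  {i : I & 'I_(rq_k (Delta i)) -> 'I_n.+1}.

Fixpoint run (S : finType) (P : dynprog S) (n : nat) (I : Type)
    (Delta : I -> rquery S) (st : state P n) (cs : seq (change Delta n)) : state P n :=
  match cs with
  | [::] => st
  | c :: cs' => @run S P n I Delta (@step S P n (Delta (projT1 c)) (projT2 c) st) cs'
  end.

Definition valid_input (S : finType) (n : nat) (inp : inrel S n) : Prop :=
  forall (s t : S) (i : 'I_n.+1), inp s i -> inp t i -> s = t.

Fixpoint valid_seq (S : finType) (n : nat) (I : Type) (Delta : I -> rquery S)
    (inp : inrel S n) (cs : seq (change Delta n)) : Prop :=
  match cs with
  | [::] => True
  | c :: cs' => let inp' := @apply_rq S n (Delta (projT1 c)) (projT2 c) inp in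
                valid_input inp' /\ @valid_seq S n I Delta inp' cs'
  end.

Definition empty_input (S : finType) (n : nat) : inrel S n := fun _ _ => false.

(* letter at position i (epsilon = None) and represented word w_1 ... w_n *)
Definition letter (S : finType) (n : nat) (inp : inrel S n) (i : 'I_n.+1) : option S :=
  [pick s | inp s i].
Definition word_of (S : finType) (n : nat) (inp : inrel S n) : seq S :=
  pmap (letter inp) (enum 'I_n.+1).

Definition maintains (S : finType) (L : seq S -> Prop) (I : Type)
    (Delta : I -> rquery S) (P : dynprog S)
    (init : forall n, auxrel (@dp_ar S P) n) : Prop :=
  @dp_ar S P (dp_Q P) = 0 /\
  forall (n : nat) (cs : seq (change Delta n)),
    cs <> [::] -> @valid_seq S n I Delta (@empty_input S n) cs ->
    forall t : (@dp_ar S P (dp_Q P)).-tuple 'I_n.+1,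
      (@run S P n I Delta (@empty_input S n, init n) cs).2 (dp_Q P) t
      <-> L (word_of (@run S P n I Delta (@empty_input S n, init n) cs).1).

(* Main.v *)
Require Import Defs.
From mathcomp Require Import all_boot zify.
Set Implicit Arguments. Unset Strict Implicit. Unset Printing Implicit Defensive.

Definition qfalse (S A : Type) (ar : A -> nat) (V : Type) : qf S ar V :=
  QNot (QTrue S ar V).

Definition conjq (S A : Type) (ar : A -> nat) (V : Type) (X : finType)
  (atom : X -> qf S ar V) (v : {ffun X -> bool}) : qf S ar V :=
  foldr (@QAnd S A ar V) (QTrue S ar V)
    [seq (if v x then atom x else QNot (atom x)) | x <- enum X].

Definition compile (S A : Type) (ar : A -> nat) (V : Type) (X : finType)
  (atom : X -> qf S ar V) (F : {ffun X -> bool} -> bool) : qf S ar V :=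
  foldr (@QOr S A ar V) (qfalse S ar V)
    [seq conjq atom v | v <- enum {ffun X -> bool} & F v].

Lemma eval_compile (S A : Type) (ar : A -> nat) (V : Type) (X : finType)
  (atom : X -> qf S ar V) (F : {ffun X -> bool} -> bool) n
  (inp : inrel S n) (aux : auxrel ar n) (e : V -> 'I_n.+1) :
  eval inp aux e (compile atom F) = F [ffun x => eval inp aux e (atom x)].
Proof.
set w := [ffun x => eval inp aux e (atom x)].
have Hc : forall v, eval inp aux e (conjq atom v) = (v == w).
  move=> v; rewrite /conjq.
  have -> : forall l, eval inp aux e (foldr (@QAnd S A ar V) (QTrue S ar V) l)
              = all (eval inp aux e) l by elim=> //= a l ->.
  rewrite all_map /=. apply/allP/eqP => [H|->].
    apply/ffunP => x; rewrite ffunE; have := H x (mem_enum _ x) => /=.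
    by case: (v x) => /=; case: (eval inp aux e (atom x)).
  by move=> x _ /=; rewrite ffunE; case E: (eval inp aux e (atom x)) => /=; rewrite ?E.
rewrite /compile.
have -> : forall l, eval inp aux e (foldr (@QOr S A ar V) (qfalse S ar V) l)
            = has (eval inp aux e) l by elim=> //= a l ->.
rewrite has_map.
rewrite (@eq_has _ _ (pred1 w)); last by move=> v /=; rewrite Hc.
by rewrite has_pred1 mem_filter mem_enum andbT.
Qed.

Section Mu.
Variables (S : finType) (W : Type).

Fixpoint evalM (ltM eqM : term W -> term W -> bool) (bitM : S -> term W -> bool)
   (mu : qf S noar W) : bool :=
  match mu with
  | QTrue => true
  | QNot p => ~~ evalM ltM eqM bitM p
  | QAnd p q => evalM ltM eqM bitM p && evalM ltM eqM bitM q
  | QOr p q => evalM ltM eqM bitM p || evalM ltM eqM bitM q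
  | QEq t u => eqM t u
  | QLt t u => ltM t u
  | QLetter s t => bitM s t
  | @QAux _ _ _ _ T _ => match T with end
  end.

Lemma evalM_eval n (inp : inrel S n) (aux : auxrel noar n) (e : W -> 'I_n.+1) mu :
  eval inp aux e mu =
  evalM (fun t u => (eval_term e t < eval_term e u)%N)
        (fun t u => eval_term e t == eval_term e u)
        (fun s t => inp s (eval_term e t)) mu.
Proof. by elim: mu => //= [p -> | p -> q -> | p -> q -> | []]. Qed.

Lemma evalM_ext l1 e1 b1 l2 e2 b2 mu :
  (forall t u, l1 t u = l2 t u) -> (forall t u, e1 t u = e2 t u) ->
  (forall s t, b1 s t = b2 s t) ->
  evalM l1 e1 b1 mu = evalM l2 e2 b2 mu.
Proof. by move=> Hl He Hb; elim: mu => //= [p -> | p -> q -> | p -> q ->]. Qed.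
End Mu.

Section Prog.
Variables (S : finType) (M : dfa S).

Definition St := dfa_state M.
Definition G := {ffun option S -> option S}.
Definition AuxT := option (G * St * St)%type.
Definition arP (T : AuxT) : nat := if T is Some _ then 2 else 0.

Definition TC (V : finType) := (V + bool)%type.
Definition tcterm (V : finType) (c : TC V) : term V :=
  match c with inl v => TVar v | inr false => TMin V | inr true => TMax V end.

Definition Atom (V : finType) :=
  (((TC V * TC V) + (TC V * TC V)) + (S * TC V) + (G * St * St * TC V * TC V))%type.

Definition atomf (V : finType) (x : Atom V) : qf S arP V :=
  match x with
  | inl (inl (inl (c, d))) => QLt S arP (tcterm c) (tcterm d)
  | inl (inl (inr (c, d))) => QEq S arP (tcterm c) (tcterm d)
  | inl (inr (s, c)) => QLetter arP s (tcterm c)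
  | inr (y, c, d) => @QAux S AuxT arP V (Some y)
                       (fun j => if val j == 0 then tcterm c else tcterm d)
  end.

Section Orc.
Variables (V : finType) (v : {ffun Atom V -> bool}).
Definition ltO c d := v (inl (inl (inl (c, d)))).
Definition eqO c d := v (inl (inl (inr (c, d)))).
Definition bitO s c := v (inl (inr (s, c))).
Definition relO (y : G * St * St) c d := v (inr (y, c, d)).
End Orc.

Definition stepO (l : option S) (p : St) : St :=
  if l is Some s then dfa_trans p s else p.

Definition gcomp (g h : G) : G := [ffun l => g (h l)].
Definition idG : G := [ffun l => l].

Section Upd.
Variables (r : rquery S) (m : nat).
Local Notation k := (rq_k r).
Local Notation V := ('I_k + 'I_m)%type.
Variable (v : {ffun Atom V -> bool}).

Definition par (i : 'I_k) : TC V := inl (inl i).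

Definition mT (c : TC V) (t : term ('I_k + 'I_1)) : TC V :=
  match t with
  | TVar (inl i) => par i | TVar (inr _) => c
  | TMin => inr false | TMax => inr true end.

Definition nbO (c : TC V) (s : S) : bool :=
  match rq_rule r s with
  | Some mu => evalM (fun t u => ltO v (mT c t) (mT c u))
                     (fun t u => eqO v (mT c t) (mT c u))
                     (fun s' t => bitO v s' (mT c t)) mu
  | None => bitO v s c end.
Definition nlO (c : TC V) : option S := [pick s | nbO c s].

Definition mX (t : term ('I_k + 'I_1)) : option (TC V) :=
  match t with
  | TVar (inl i) => Some (par i) | TVar (inr _) => None
  | TMin => Some (inr false) | TMax => Some (inr true) end.

Definition ltR (u w : TC V) (t1 t2 : term ('I_k + 'I_1)) : bool :=
  match mX t1, mX t2 with
  | None, None => false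
  | None, Some c => ltO v w c || eqO v w c
  | Some c, None => ltO v c u || eqO v c u
  | Some c, Some d => ltO v c d end.
Definition eqR (t1 t2 : term ('I_k + 'I_1)) : bool :=
  match mX t1, mX t2 with
  | None, None => true
  | Some c, Some d => eqO v c d
  | _, _ => false end.
Definition bitR (l : option S) (s : S) (t : term ('I_k + 'I_1)) : bool :=
  match mX t with None => l == Some s | Some c => bitO v s c end.

Definition nbR (u w : TC V) (l : option S) (s : S) : bool :=
  match rq_rule r s with
  | Some mu => evalM (ltR u w) eqR (bitR l) mu
  | None => l == Some s end.
Definition hR (u w : TC V) : G := [ffun l => [pick s | nbR u w l s]].

Definition jump (g : G) (u w : TC V) (p : St) : St :=
  odflt p [pick q | relO v (gcomp g (hR u w), p, q) u w].

Fixpoint segF (g : G) (f : nat) (u w : TC V) (p : St) : St :=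
  match f with
  | 0 => jump g u w p
  | f'.+1 =>
    match [pick c : 'I_k | ltO v u (par c) && ltO v (par c) w] with
    | None => jump g u w p
    | Some c => segF g f' (par c) w (stepO (g (nlO (par c))) (segF g f' u (par c) p))
    end
  end.
End Upd.

Definition PsiR (r : rquery S) (y : G * St * St) (v : {ffun Atom ('I_(rq_k r) + 'I_2)%type -> bool}) : bool :=
  let: (g, p, q) := y in
  segF v g (rq_k r).+1 (inl (inr ord0)) (inl (inr ord_max)) p == q.

Definition PsiQ (r : rquery S) (v : {ffun Atom ('I_(rq_k r) + 'I_0)%type -> bool}) : bool :=
  let mn : TC ('I_(rq_k r) + 'I_0)%type := inr false in
  let mx : TC ('I_(rq_k r) + 'I_0)%type := inr true in
  if ltO v mn mx then
    dfa_acc (stepO (nlO v mx) (segF v idG (rq_k r).+1 mn mx (stepO (nlO v mn) (dfa_s0 M))))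
  else dfa_acc (stepO (nlO v mn) (dfa_s0 M)).

Definition upd (r : rquery S) (T : AuxT) : qf S arP ('I_(rq_k r) + 'I_(arP T))%type :=
  match T as T0 return qf S arP ('I_(rq_k r) + 'I_(arP T0))%type with
  | None => compile (@atomf _) (@PsiQ r)
  | Some y => compile (@atomf _) (@PsiR r y)
  end.

Definition prog : dynprog S := @DynProg S AuxT arP None upd.

End Prog.

Section Seqs.
Variables (S : finType) (M : dfa S).
Local Notation St := (St M).
Local Notation G := (G S).
Local Notation delta := (@dfa_trans S M).

Definition segw n (lam : 'I_n.+1 -> option S) (g : G) (u w : nat) : seq S :=
  pmap (fun j => g (lam (inord j))) (iota u.+1 (w - u.+1)).

Lemma foldl_pmap_cons (T : Type) (f : T -> option S) x l p :
  foldl delta p (pmap f (x :: l)) = foldl delta (stepO (f x) p) (pmap f l).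
Proof. by rewrite /=; case: (f x). Qed.

Lemma segw_split n (lam : 'I_n.+1 -> option S) g (u c w : nat) p :
  u < c -> c < w ->
  foldl delta p (segw lam g u w) =
  foldl delta (stepO (g (lam (inord c))) (foldl delta p (segw lam g u c))) (segw lam g c w).
Proof.
move=> uc cw; rewrite /segw.
have -> : w - u.+1 = (c - u.+1) + (w - c.+1).+1 by lia.
rewrite iotaD pmap_cat foldl_cat.
have -> : u.+1 + (c - u.+1) = c by lia.
by rewrite /= ; case: (g (lam (inord c))).
Qed.

Lemma segw_base n (lam lam' : 'I_n.+1 -> option S) (g h : G) (u w : nat) :
  (forall j, u < j -> j < w -> lam' (inord j) = h (lam (inord j))) ->
  segw lam' g u w = segw lam (gcomp g h) u w.
Proof.
move=> H; rewrite /segw; apply: eq_in_pmap => j; rewrite mem_iota => /andP [h1 h2].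
by rewrite /gcomp ffunE H //; lia.
Qed.

Lemma word_split n (lam : 'I_n.+1 -> option S) :
  foldl delta (dfa_s0 M) (pmap lam (enum 'I_n.+1)) =
  if 0 < n then
    stepO (lam ord_max) (foldl delta (stepO (lam ord0) (dfa_s0 M)) (segw lam (idG S) 0 n))
  else stepO (lam ord0) (dfa_s0 M).
Proof.
have Henum : enum 'I_n.+1 = map inord (iota 0 n.+1).
  rewrite -val_enum_ord -map_comp -[LHS]map_id; apply: eq_map => i /=.
  by rewrite inord_val.
have Hpm : forall l : seq nat, pmap lam (map inord l) = pmap (fun j => lam (inord j)) l.
  by elim=> //= a l ->.
rewrite Henum Hpm.
have H0 : inord 0 = ord0 :> 'I_n.+1 by apply: val_inj; rewrite /= inordK.
clear Hpm Henum; case: n lam H0 => [|n] lam H0.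
  by rewrite /= H0; case: (lam ord0).
have Hm : inord n.+1 = ord_max :> 'I_n.+2 by apply: val_inj; rewrite /= inordK.
have -> : iota 0 n.+2 = 0 :: (iota 1 n ++ [:: n.+1]).
  by rewrite -addn1 iotaD.
rewrite foldl_pmap_cons H0 pmap_cat foldl_cat /segw subn1 /=.
have -> : pmap (fun j => idG S (lam (inord j))) (iota 1 n) = pmap (fun j => lam (inord j)) (iota 1 n).
  by apply: eq_pmap => j; rewrite /idG ffunE.
by rewrite Hm; case: (lam ord_max).
Qed.
End Seqs.

Section Val.
Variables (S : finType) (M : dfa S).
Local Notation St := (St M).
Local Notation G := (G S).
Local Notation delta := (@dfa_trans S M).
Variables (n : nat) (inp : inrel S n) (aux : auxrel (@arP S M) n).

Definition Inv : Prop :=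
  (forall t, @aux None t = dfa_accepts M (word_of inp)) /\
  (forall (g : G) (p q : St) (t : 2.-tuple 'I_n.+1),
      @aux (Some (g, p, q)) t =
      (foldl delta p (segw (letter inp) g (tnth t ord0) (tnth t ord_max)) == q)).

Definition pos (V : finType) (e : V -> 'I_n.+1) (c : TC V) : 'I_n.+1 :=
  match c with inl x => e x | inr b => if b then ord_max else ord0 end.

Section Env.
Variables (V : finType) (e : V -> 'I_n.+1).
Definition vA : {ffun Atom M V -> bool} := [ffun x => eval inp aux e (@atomf S M V x)].

Lemma eval_tcterm c : eval_term e (tcterm c) = pos e c.
Proof. by case: c => [|[]]. Qed.

Lemma ltO_A c d : ltO vA c d = (pos e c < pos e d).
Proof. by rewrite /ltO ffunE /= !eval_tcterm. Qed.
Lemma eqO_A c d : eqO vA c d = (pos e c == pos e d).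
Proof. by rewrite /eqO ffunE /= !eval_tcterm. Qed.
Lemma bitO_A s c : bitO vA s c = inp s (pos e c).
Proof. by rewrite /bitO ffunE /= !eval_tcterm. Qed.
Lemma relO_A g p q c d : Inv ->
  relO vA (g, p, q) c d = (foldl delta p (segw (letter inp) g (pos e c) (pos e d)) == q).
Proof.
move=> [_ H]; rewrite /relO ffunE /= H !tnth_mktuple /= !eval_tcterm //.
Qed.
End Env.

Lemma valid_letter (Hv : valid_input inp) s x : inp s x = (letter inp x == Some s).
Proof.
rewrite /letter; case: pickP => [t Ht|H]; last by rewrite H.
case E: (inp s x).
  by rewrite (Hv _ _ _ Ht E) eqxx.
apply/esym/eqP => [[ts]]; by rewrite -ts Ht in E.
Qed.
End Val.

Section Loc.
Variables (S : finType) (M : dfa S).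
Variables (n : nat) (inp : inrel S n) (aux : auxrel (@arP S M) n).
Variables (r : rquery S) (m : nat) (a : 'I_(rq_k r) -> 'I_n.+1)
          (e : ('I_(rq_k r) + 'I_m)%type -> 'I_n.+1).
Hypothesis He : forall i, e (inl i) = a i.
Local Notation vA := (@vA S M n inp aux _ e).
Local Notation pos := (@pos n _ e).

Definition exv (x : 'I_n.+1) (v : ('I_(rq_k r) + 'I_1)%type) : 'I_n.+1 :=
  match v with inl i => a i | inr _ => x end.

Lemma pos_mT c t : pos (mT c t) = eval_term (exv (pos c)) t.
Proof. by case: t => [[i|j]||] //=; rewrite He. Qed.

Lemma NL c : letter (apply_rq a inp) (pos c) = nlO vA c.
Proof.
rewrite /letter /nlO; apply: eq_pick => s /=; rewrite /apply_rq /nbO.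
case: (rq_rule r s) => [mu|]; last by rewrite bitO_A.
rewrite evalM_eval; apply: evalM_ext => [t u|t u|s' t].
- by rewrite ltO_A !pos_mT.
- by rewrite eqO_A !pos_mT.
- by rewrite bitO_A !pos_mT.
Qed.

Section Region.
Variables (u w : TC ('I_(rq_k r) + 'I_m)%type) (x : 'I_n.+1).
Hypothesis Hv : valid_input inp.
Hypothesis Hux : pos u < x.
Hypothesis Hxw : x < pos w.
Hypothesis Hnp : forall i, ~~ ((pos u < a i) && (a i < pos w)).

Lemma mX_cases t :
  (mX m t = None /\ eval_term (exv x) t = x) \/
  (exists c, mX m t = Some c /\ eval_term (exv x) t = pos c /\
             (pos c <= pos u \/ pos w <= pos c)).
Proof.
case: t => [[i|j]||] /=.
- right; exists (par m i); split=> //; split; first by rewrite /= He.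
  have := Hnp i; rewrite /= He; case/nandP; rewrite -leqNgt; [left|right] => //.
- by left.
- right; exists (inr false); split=> //; split=> //=; left; lia.
- right; exists (inr true); split=> //; split=> //=; right.
  have := ltn_ord (pos w); lia.
Qed.

Lemma ordE N (i j : 'I_N) : (i == j) = (nat_of_ord i == nat_of_ord j).
Proof. by []. Qed.

Lemma NR : letter (apply_rq a inp) x = hR vA u w (letter inp x).
Proof.
rewrite /hR ffunE /letter; apply: eq_pick => s /=; rewrite /apply_rq /nbR.
case: (rq_rule r s) => [mu|]; last by rewrite (valid_letter Hv).
rewrite evalM_eval -/(exv x); apply: evalM_ext => [t1 t2|t1 t2|s' t].
- rewrite /ltR.
  case: (mX_cases t1) => [[-> ->]|[c1 [-> [-> H1]]]];
  case: (mX_cases t2) => [[-> ->]|[c2 [-> [-> H2]]]];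
  rewrite ?ltO_A ?eqO_A ?ordE /=; rewrite /reverse_coercion; lia.
- rewrite /eqR ordE.
  case: (mX_cases t1) => [[-> ->]|[c1 [-> [-> H1]]]];
  case: (mX_cases t2) => [[-> ->]|[c2 [-> [-> H2]]]];
  rewrite ?eqO_A ?ordE /= /reverse_coercion; lia.
- rewrite /bitR.
  case: (mX_cases t) => [[-> ->]|[c1 [-> [-> H1]]]].
    by rewrite (valid_letter Hv).
  by rewrite bitO_A.
Qed.
End Region.
End Loc.

Section SegOK.
Variables (S : finType) (M : dfa S).
Local Notation delta := (@dfa_trans S M).
Variables (n : nat) (inp : inrel S n) (aux : auxrel (@arP S M) n).
Variables (r : rquery S) (m : nat) (a : 'I_(rq_k r) -> 'I_n.+1)
          (e : ('I_(rq_k r) + 'I_m)%type -> 'I_n.+1).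
Hypothesis He : forall i, e (inl i) = a i.
Hypothesis Hinv : Inv inp aux.
Hypothesis Hv : valid_input inp.
Local Notation vA := (@vA S M n inp aux _ e).
Local Notation pos := (@pos n _ e).

Definition cnt (u w : TC ('I_(rq_k r) + 'I_m)%type) :=
  #|[pred i : 'I_(rq_k r) | (pos u < a i) && (a i < pos w)]|.

Lemma cnt_lt u w c : pos u < a c -> a c < pos w ->
  cnt u (par m c) < cnt u w /\ cnt (par m c) w < cnt u w.
Proof.
move=> h1 h2; rewrite /cnt /= He; split; apply: proper_card; apply/properP; split.
- by apply/subsetP => i; rewrite !inE => /andP [-> h3] /=; lia.
- by exists c; rewrite !inE ?h1 ?h2 //= ltnn.
- by apply/subsetP => i; rewrite !inE => /andP [h3 ->]; rewrite andbT; lia.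
- by exists c; rewrite !inE ?h1 ?h2 //= ltnn.
Qed.

Lemma segF_ok g f : forall u w p, cnt u w < f ->
  segF vA g f u w p = foldl delta p (segw (letter (apply_rq a inp)) g (pos u) (pos w)).
Proof.
elim: f => [//|f IH] u w p Hc /=.
have Hjump : (forall i, ~~ ((pos u < a i) && (a i < pos w))) ->
   jump vA g u w p = foldl delta p (segw (letter (apply_rq a inp)) g (pos u) (pos w)).
  move=> Hnp; rewrite /jump.
  rewrite (@segw_base S n (letter inp) _ g (hR vA u w)); last first.
    move=> j h1 h2.
    have hj : j < n.+1 by have := ltn_ord (pos w); lia.
    apply: (NR aux He) => //; by rewrite inordK.
  case: pickP => [q|H]; first by rewrite (relO_A _ _ _ _ _ _ Hinv) => /eqP ->.
  by have := H (foldl delta p (segw (letter inp) (gcomp g (hR vA u w)) (pos u) (pos w)));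
     rewrite (relO_A _ _ _ _ _ _ Hinv) eqxx.
case: pickP => [c /andP [h1 h2] | Hn].
  rewrite !ltO_A /= He in h1 h2.
  have [c1 c2] := cnt_lt h1 h2.
  rewrite IH; last by lia.
  rewrite IH; last by lia.
  rewrite (@segw_split S M n _ g (pos u) (a c) (pos w)) //.
  by rewrite /= He inord_val -(NL inp aux He (par m c)) /= He.
  apply: Hjump => i; move: (Hn i) => /=; rewrite !ltO_A /= He => -> //.
Qed.
End SegOK.

Section Pres.
Variables (S : finType) (M : dfa S).
Local Notation delta := (@dfa_trans S M).

Lemma cnt_le n (r : rquery S) m (a : 'I_(rq_k r) -> 'I_n.+1) (e : ('I_(rq_k r) + 'I_m)%type -> 'I_n.+1) u w :
  cnt a e u w < (rq_k r).+1.
Proof. by rewrite /cnt ltnS (leq_trans (max_card _)) // card_ord. Qed.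

Lemma pres n (inp : inrel S n) (aux : auxrel (@arP S M) n) (r : rquery S)
    (a : 'I_(rq_k r) -> 'I_n.+1) :
  Inv inp aux -> valid_input inp ->
  Inv (@step S (prog M) n r a (inp, aux)).1 (@step S (prog M) n r a (inp, aux)).2.
Proof.
move=> Hinv Hv; split.
- move=> t /=; rewrite eval_compile /PsiQ.
  set e := (fun v => match v with inl i => a i | inr j => tnth t j end).
  have He : forall i, e (inl i) = a i by [].
  rewrite -/(vA inp aux e).
  rewrite (segF_ok He Hinv Hv); last exact: cnt_le.
  rewrite /dfa_accepts /word_of word_split.
  rewrite (ltO_A inp aux e).
  rewrite -(NL inp aux He (inr false)) -(NL inp aux He (inr true)) /=.
  case: n inp aux Hinv Hv a t e He => [|n] inp aux Hinv Hv a t e He //=.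
- move=> g p q t /=; rewrite eval_compile /PsiR.
  set e := (fun v => match v with inl i => a i | inr j => tnth t j end).
  have He : forall i, e (inl i) = a i by [].
  rewrite -/(vA inp aux e).
  by rewrite (segF_ok He Hinv Hv) //; last exact: cnt_le.
Qed.
End Pres.

Definition initaux (S : finType) (M : dfa S) (n : nat) : auxrel (@arP S M) n :=
  fun T => match T as T0 return pred ((@arP S M T0).-tuple 'I_n.+1) with
  | None => fun _ => dfa_accepts M (word_of (@empty_input S n))
  | Some y => let: (g, p, q) := y in fun t : 2.-tuple 'I_n.+1 =>
      foldl (@dfa_trans S M) p
        (segw (letter (@empty_input S n)) g (tnth t ord0) (tnth t ord_max)) == q
  end.

Lemma run_inv (S : finType) (M : dfa S) (I : Type) (Delta : I -> rquery S) n
  (cs : seq (change Delta n)) :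
  forall inp aux, Inv inp aux -> valid_input inp -> valid_seq inp cs ->
  Inv (@run S (prog M) n I Delta (inp, aux) cs).1 (@run S (prog M) n I Delta (inp, aux) cs).2.
Proof.
elim: cs => [//|c cs IH] inp aux Hi Hv /= [Hv' Hs].
have Hi' := @pres S M n inp aux (Delta (projT1 c)) (projT2 c) Hi Hv.
exact: IH.
Qed.

Theorem theorem6p1 (S : finType) (L : seq S -> Prop) (I : finType)
    (Delta : I -> rquery S) :
  regular L ->
  exists (P : dynprog S) (init : forall n : nat, auxrel (@dp_ar S P) n),
    @maintains S L I Delta P init.
Proof.
move=> [M HM]; exists (prog M), (@initaux S M); split => // n cs _ Hs t.
have Hi0 : Inv (@empty_input S n) (@initaux S M n).
  by split => // g p q tt.
have Hv0 : valid_input (@empty_input S n) by [].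
have [HQ _] := run_inv Hi0 Hv0 Hs.
by rewrite HM -(HQ t).
Qed.
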